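(* Let $n\geqslant 1$ and $1\leqslant d\leqslant n-1$ be integers. Then \begin{align*} &\sum_{k=1}^{n-1}q^k\begin{bmatrix}2k\\ k+d\end{bmatrix}\frac{(-q^{k+1};q)_{n-k}}{[k]} =-\sum_{k=1}^{\lfloor(n+1-d)/2\rfloor}(-1)^kq^{3k^2+(3d-5)k-2d+2}\frac{[2d+4k-2]}{[d][n]}\begin{bmatrix}2n\\ n-d-2k+1\end{bmatrix}, \end{align*} and \begin{align*} \sum_{k=1}^{n}q^k\begin{bmatrix}2k\\ k+d\end{bmatrix}\frac{(-q^{k+1};q)_{n-k}^2}{[k]} =\sum_{k=d}^{n-1}q^{\binom{k+1}{2}-\binom{d}{2}}\frac{1}{[d]}\begin{bmatrix}2n+1\\ n-k\end{bmatrix}+\frac{q^{\binom{n+1}{2}-\binom{d}{2}}}{[d]}. \end{align*}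
   Context: Here $q$ is an indeterminate, $[m]=(1-q^m)/(1-q)=1+q+\cdots+q^{m-1}$ is the $q$-integer, and $\lfloor x\rfloor$ is the largest integer $\le x$. For $n\geq 1$, $(x;q)_n=(1-x)(1-xq)\cdots(1-xq^{n-1})$ and $(x;q)_0=1$. The $q$-binomial coefficient is $\begin{bmatrix}n\\ k\end{bmatrix}=\frac{(q;q)_n}{(q;q)_k(q;q)_{n-k}}$ if $0\leqslant k\leqslant n$ and $0$ otherwise. *)

(* Defs.v *)
From mathcomp Require Import all_boot all_order all_algebra.
Set Implicit Arguments. Unset Strict Implicit. Unset Printing Implicit Defensive.
Import GRing.Theory Num.Theory.
Local Open Scope ring_scope.

Definition Qq : fieldType := {fraction {poly rat}}.
Definition q : Qq := tofrac ('X : {poly rat}).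

Definition qpoch (x : Qq) (n : nat) : Qq := \prod_(i < n) (1 - x * q ^+ i).

Definition qint (m : nat) : Qq := (1 - q ^+ m) / (1 - q).

Definition qbin (n k : nat) : Qq :=
  if (k <= n)%N then qpoch q n / (qpoch q k * qpoch q (n - k)) else 0.

(* Main.v *)
Require Import Defs.
From mathcomp Require Import all_boot all_order all_algebra.
From mathcomp Require Import ring zify.
Import GRing.Theory Num.Theory.
Local Open Scope ring_scope.

Definition gqpoch {F : fieldType} (t x : F) (n : nat) : F := \prod_(i < n) (1 - x * t ^+ i).
Definition gqint {F : fieldType} (t : F) (m : nat) : F := (1 - t ^+ m) / (1 - t).
Definition gqbin {F : fieldType} (t : F) (n k : nat) : F :=
  if (k <= n)%N then gqpoch t t n / (gqpoch t t k * gqpoch t t (n - k)) else 0.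
Definition tgood {F : fieldType} (t : F) := t != 0 /\ forall m, (0 < m)%N -> t ^+ m != 1.

Lemma q_neq0 : q != 0.
Proof. by rewrite /q tofrac_eq0 polyX_eq0. Qed.

Lemma qX_neq1 m : (0 < m)%N -> q ^+ m != 1.
Proof.
move=> m0; rewrite /q -rmorphXn /=.
rewrite -(rmorph1 (@tofrac _)) tofrac_eq.
apply/eqP => /(congr1 (fun p : {poly rat} => size p)).
by rewrite size_polyXn size_poly1; case: m m0.
Qed.

Lemma q_good : tgood q.
Proof. split; [exact: q_neq0 | exact: qX_neq1]. Qed.

Lemma e_neq0 {F : fieldType} (t : F) : tgood t -> forall m, (0 < m)%N -> 1 - t ^+ m != 0.
Proof. by move=> [_ h] m m0; rewrite subr_eq0 eq_sym h. Qed.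

Lemma qpochS {F : fieldType} (t : F) n : gqpoch t t n.+1 = gqpoch t t n * (1 - t ^+ n.+1).
Proof. by rewrite /gqpoch big_ord_recr /= exprS. Qed.

Lemma qpoch0 {F : fieldType} (t x : F) : gqpoch t x 0 = 1.
Proof. by rewrite /gqpoch big_ord0. Qed.

Lemma qpochSx {F : fieldType} (t x : F) n : gqpoch t x n.+1 = gqpoch t x n * (1 - x * t ^+ n).
Proof. by rewrite /gqpoch big_ord_recr /=. Qed.

Lemma qpoch_neq0 {F : fieldType} (t : F) : tgood t -> forall n, gqpoch t t n != 0.
Proof. move=> ht; elim => [|n IH]; first by rewrite qpoch0 oner_neq0.
by rewrite qpochS mulf_neq0 // e_neq0. Qed.

Lemma qbin_gt {F : fieldType} (t : F) n k : (n < k)%N -> gqbin t n k = 0.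
Proof. by rewrite /gqbin ltnNge => /negbTE ->. Qed.

Lemma qbin0 {F : fieldType} (t : F) : tgood t -> forall n, gqbin t n 0 = 1.
Proof. by move=> ht n; rewrite /gqbin leq0n subn0 qpoch0 mul1r divff // qpoch_neq0. Qed.

Lemma qbinn {F : fieldType} (t : F) : tgood t -> forall n, gqbin t n n = 1.
Proof. by move=> ht n; rewrite /gqbin leqnn subnn qpoch0 mulr1 divff // qpoch_neq0. Qed.

Lemma qbinSS {F : fieldType} (t : F) n k : (k <= n)%N ->
  gqbin t n.+1 k.+1 = gqbin t n k * (1 - t ^+ n.+1) / (1 - t ^+ k.+1).
Proof.
move=> kn; rewrite /gqbin ltnS kn subSS !qpochS !invfM; ring.
Qed.

Lemma qbin_up {F : fieldType} (t : F) : tgood t -> forall n k, (k < n)%N ->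
  gqbin t n k.+1 = gqbin t n k * (1 - t ^+ (n - k)) / (1 - t ^+ k.+1).
Proof.
move=> ht n k kn; rewrite /gqbin kn (ltnW kn).
have -> : (n - k = (n - k.+1).+1)%N by rewrite subnSK.
rewrite !qpochS !invfM.
have h := e_neq0 t ht _ (ltn0Sn (n - k.+1)).
have h1 := e_neq0 t ht _ (ltn0Sn k).
have h2 := qpoch_neq0 t ht.
field. by rewrite h h1 !h2.
Qed.

Lemma qbin_sym {F : fieldType} (t : F) n k : (k <= n)%N -> gqbin t n (n - k) = gqbin t n k.
Proof.
move=> kn; rewrite /gqbin leq_subr subKn // kn; congr (_ / _); exact: mulrC.
Qed.

Lemma qbin1 {F : fieldType} (t : F) : tgood t -> forall n, (0 < n)%N -> gqbin t n 1 = (1 - t ^+ n) / (1 - t).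
Proof.
move=> ht [//|n] _; rewrite qbinSS // qbin0 // mul1r expr1 //.
Qed.


Lemma qbinS_l {F : fieldType} (t : F) : tgood t -> forall n k, (k <= n)%N ->
  gqbin t n.+1 k = gqbin t n k * (1 - t ^+ n.+1) / (1 - t ^+ (n.+1 - k)).
Proof.
move=> ht n k kn; rewrite /gqbin kn (leqW kn) subSn // !qpochS.
have h := e_neq0 t ht _ (ltn0Sn (n - k)).
have h2 := qpoch_neq0 t ht.
field. by rewrite h !h2.
Qed.

Lemma part2_term {F : fieldType} (t : F) : tgood t -> forall j k : nat,
  t ^+ 'C(k.+1, 2) * (gqbin t (2 * (j + k) + 3) j.+1
     - (1 + t ^+ (j + k).+1) ^+ 2 * gqbin t (2 * (j + k) + 1) j)
  = t ^+ 'C(k, 2) * gqint t k * t ^+ (j + k).+1 * gqbin t (2 * (j + k) + 2) j.+1 / gqint t (j + k).+1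
    - t ^+ 'C(k.+1, 2) * gqint t k.+1 * t ^+ (j + k).+1 * gqbin t (2 * (j + k) + 2) j / gqint t (j + k).+1.
Proof.
move=> ht j k.
have e3 : (2 * (j + k) + 3 = (2 * (j + k) + 2).+1)%N by lia.
have e2 : (2 * (j + k) + 2 = (2 * (j + k) + 1).+1)%N by lia.
rewrite e3 qbinSS; last by lia.
rewrite e2 qbinSS; last by lia.
rewrite qbinS_l //; last by lia.
rewrite -e2 -e3 /gqint binS bin1.
set X := gqbin t (2 * (j + k) + 1) j.
have -> : (2 * (j + k) + 2 - j = j + k * 2 + 2)%N by lia.
have -> : (2 * (j + k) + 2 = j * 2 + k * 2 + 2)%N by lia.
have -> : (2 * (j + k) + 3 = j * 2 + k * 2 + 3)%N by lia.
have -> : ((j + k).+1 = j + k + 1)%N by lia.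
have -> : (j.+1 = j + 1)%N by lia.
have -> : (k.+1 = k + 1)%N by lia.
rewrite !exprD !exprM.
have [t0 ht1] := ht.
have hq := e_neq0 t ht.
have n1 : 1 - t ^+ j * t ^+ 1 != 0 by rewrite -exprD hq // addn1.
have n2 : 1 - t ^+ j * t ^+ k * t ^+ 1 != 0 by rewrite -!exprD hq // addn1.
have n3 : 1 - t ^+ j * (t ^+ k) ^+ 2 * t ^+ 2 != 0 by rewrite -exprM -!exprD hq // addn2.
have n4 : 1 - t != 0 by rewrite -[t]expr1 hq.
have n5 : 1 - t ^+ k * t ^+ 1 != 0 by rewrite -exprD hq // addn1.
field.
by rewrite n1 n2 n3 n4.
Qed.


Definition qbz {F : fieldType} (t : F) (N : nat) (z : int) : F :=
  match z with Posz m => gqbin t N m | Negz _ => 0 end.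

Lemma qbz_pos {F : fieldType} (t : F) N (z : int) m : z = m%:Z -> qbz t N z = gqbin t N m.
Proof. by move=> ->. Qed.

Lemma qbz_neg {F : fieldType} (t : F) N (z : int) : (z < 0)%R -> qbz t N z = 0.
Proof. by case: z. Qed.

Definition ck {F : fieldType} (t : F) (d k : nat) : F :=
  (-1) ^+ k * (t ^+ (3 * (k * k) + 3 * (d * k) + 2) / t ^+ (5 * k + 2 * d)) * gqint t (2 * d + 4 * k - 2).

Definition Wt {F : fieldType} (t : F) (d n k : nat) : F :=
  ck t d k * qbz t (2 * n) (n%:Z + 1 - d%:Z - 2 * k%:Z).

Definition Gf {F : fieldType} (t : F) (d n k : nat) : F :=
  (-1) ^+ k * (t ^+ (n + 3 * (k * k) + 3 * (d * k)) / t ^+ k) * (1 + t ^+ n.+1)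
  * gqint t (d + 2 * k) * qbz t (2 * n) (n%:Z - d%:Z - 2 * k%:Z) / gqint t n.

Lemma part1_term {F : fieldType} (t : F) : tgood t -> forall d n k : nat, (1 <= d)%N ->
  Wt t d n.+1 k.+1 / gqint t n.+1 - (1 + t ^+ n.+1) * Wt t d n k.+1 / gqint t n
  = Gf t d n k.+1 - Gf t d n k.
Proof.
move=> ht d n k d1.
have [t0 ht1] := ht.
have hq := e_neq0 t ht.
rewrite /Wt /Gf /ck.
case: (ltnP n (d + 2 * k)) => [lt|ge].
  rewrite !qbz_neg; try lia. rewrite !(mul0r, mulr0, subr0, sub0r, oppr0) //.
Ltac pw hn := rewrite ?hn -?exprM -?exprD; congr (_ ^+ _); nia.
case: (ltnP n (d + 2 * k + 2)) => [lt2|ge2].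
  have n1 : 1 - t != 0 by rewrite -[t]expr1 hq.
  set D := t ^+ d. set B := t ^+ k. set Y := t ^+ (k * k). set Z := t ^+ (d * k).
  have nB : B != 0 by rewrite expf_neq0.
  have nD : D != 0 by rewrite expf_neq0.
  have nY : Y != 0 by rewrite expf_neq0.
  have nZ : Z != 0 by rewrite expf_neq0.
  case: (ltnP n (d + 2 * k + 1)) => [lt3|ge3].
    have hn : n = (d + 2 * k)%N by lia.
    rewrite (@qbz_pos _ t _ _ 0%N); last by lia.
    rewrite (@qbz_neg _ t _ (n%:Z + 1 - d%:Z - 2 * k.+1%:Z)); last by lia.
    rewrite (@qbz_neg _ t _ (n%:Z - d%:Z - 2 * k.+1%:Z)); last by lia.
    rewrite (@qbz_pos _ t _ _ 0%N); last by lia.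
    rewrite !qbin0 // !(mulr0, mul0r, subr0, sub0r) /gqint [(-1) ^+ k.+1]exprS.
    have -> : t ^+ (3 * (k.+1 * k.+1) + 3 * (d * k.+1) + 2) = Y^+3 * B^+6 * Z^+3 * D^+3 * t^+5 by pw hn.
    have -> : t ^+ (5 * k.+1 + 2 * d) = B^+5 * D^+2 * t^+5 by pw hn.
    have -> : t ^+ (2 * d + 4 * k.+1 - 2) = D^+2 * B^+4 * t^+2 by pw hn.
    have -> : t ^+ (n + 3 * (k * k) + 3 * (d * k)) = D * B^+2 * Y^+3 * Z^+3 by pw hn.
    have -> : t ^+ (d + 2 * k) = D * B^+2 by pw hn.
    have -> : t ^+ n.+1 = D * B^+2 * t^+1 by pw hn.
    have -> : t ^+ n = D * B^+2 by pw hn.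
    have m1 : 1 - D * B ^+ 2 * t ^+ 1 != 0 by rewrite -exprM -!exprD hq //; lia.
    have m1' : 1 - D * B ^+ 2 * t != 0 by exact: m1.
    have m2 : 1 - D * B ^+ 2 != 0 by rewrite -exprM -!exprD hq //; lia.
    field.
    by rewrite n1 m2 nB m1' t0 nD.
  have hn : n = (d + 2 * k + 1)%N by lia.
  rewrite (@qbz_pos _ t _ _ 1%N); last by lia.
  rewrite (@qbz_pos _ t _ _ 0%N); last by lia.
  rewrite (@qbz_neg _ t _ (n%:Z - d%:Z - 2 * k.+1%:Z)); last by lia.
  rewrite (@qbz_pos _ t _ _ 1%N); last by lia.
  rewrite !qbin1 //; try lia.
  rewrite !qbin0 // !(mulr0, mul0r, subr0, sub0r) /gqint [(-1) ^+ k.+1]exprS.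
  have -> : t ^+ (3 * (k.+1 * k.+1) + 3 * (d * k.+1) + 2) = Y^+3 * B^+6 * Z^+3 * D^+3 * t^+5 by pw hn.
  have -> : t ^+ (5 * k.+1 + 2 * d) = B^+5 * D^+2 * t^+5 by pw hn.
  have -> : t ^+ (2 * d + 4 * k.+1 - 2) = D^+2 * B^+4 * t^+2 by pw hn.
  have -> : t ^+ (n + 3 * (k * k) + 3 * (d * k)) = D * B^+2 * Y^+3 * Z^+3 * t^+1 by pw hn.
  have -> : t ^+ (d + 2 * k) = D * B^+2 by pw hn.
  have -> : t ^+ (2 * n.+1) = D^+2 * B^+4 * t^+4 by pw hn.
  have -> : t ^+ (2 * n) = D^+2 * B^+4 * t^+2 by pw hn.
  have -> : t ^+ n.+1 = D * B^+2 * t^+2 by pw hn.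
  have -> : t ^+ n = D * B^+2 * t^+1 by pw hn.
  have m1 : 1 - D * B ^+ 2 * t ^+ 1 != 0 by rewrite -exprM -!exprD hq //; lia.
  have m1' : 1 - D * B ^+ 2 * t != 0 by exact: m1.
  have m2 : 1 - D * B ^+ 2 * t ^+ 2 != 0 by rewrite -exprM -!exprD hq //; lia.
  field.
  by rewrite n1 m1' nB t0 nD m2.
have [j hn] : exists j, n = (j + d + 2 * k + 2)%N by exists (n - (d + 2 * k + 2))%N; lia.
rewrite (@qbz_pos _ t _ _ (j + 2)%N); last by lia.
rewrite (@qbz_pos _ t _ _ (j + 1)%N); last by lia.
rewrite (@qbz_pos _ t _ _ j); last by lia.
rewrite (@qbz_pos _ t _ _ (j + 2)%N); last by lia.
set X := gqbin t (2 * n) j.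
have B2 : gqbin t (2 * n) (j + 1) = X * (1 - t ^+ (2 * n - j)) / (1 - t ^+ (j + 1)).
  by rewrite addn1 qbin_up //; lia.
have B3 : gqbin t (2 * n) (j + 2) = X * (1 - t ^+ (2 * n - j)) * (1 - t ^+ (2 * n - j - 1))
     / ((1 - t ^+ (j + 1)) * (1 - t ^+ (j + 2))).
  rewrite (_ : (j + 2 = (j + 1).+1)%N); last by lia.
  rewrite qbin_up //; last by lia.
  rewrite B2 (_ : (2 * n - (j + 1) = 2 * n - j - 1)%N); last by lia.
  rewrite (_ : ((j + 1).+1 = j + 2)%N); last by lia.
  rewrite !invfM; ring.
have B1 : gqbin t (2 * n.+1) (j + 2) = X * (1 - t ^+ (2 * n + 1)) * (1 - t ^+ (2 * n + 2))
     / ((1 - t ^+ (j + 1)) * (1 - t ^+ (j + 2))).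
  rewrite (_ : (2 * n.+1 = (2 * n + 1).+1)%N); last by lia.
  rewrite (_ : (j + 2 = (j + 1).+1)%N); last by lia.
  rewrite qbinSS; last by lia.
  rewrite (_ : (2 * n + 1 = (2 * n).+1)%N); last by lia.
  rewrite (_ : (j + 1 = j.+1)%N); last by lia.
  rewrite qbinSS; last by lia.
  rewrite -/X (_ : ((2 * n).+1.+1 = 2 * n + 2)%N); last by lia.
  rewrite (_ : (j.+2 = j + 2)%N); last by lia.
  rewrite (_ : ((2 * n).+1 = 2 * n + 1)%N); last by lia.
  rewrite !invfM; ring.
rewrite B1 B2 B3 /gqint [(-1) ^+ k.+1]exprS.
set A := t ^+ j. set D := t ^+ d. set B := t ^+ k. set Y := t ^+ (k * k). set Z := t ^+ (d * k).
have -> : t ^+ (3 * (k.+1 * k.+1) + 3 * (d * k.+1) + 2) = Y^+3 * B^+6 * Z^+3 * D^+3 * t^+5 by pw hn.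
have -> : t ^+ (5 * k.+1 + 2 * d) = B^+5 * D^+2 * t^+5 by pw hn.
have -> : t ^+ (2 * d + 4 * k.+1 - 2) = D^+2 * B^+4 * t^+2 by pw hn.
have -> : t ^+ (2 * n + 1) = A^+2 * D^+2 * B^+4 * t^+5 by pw hn.
have -> : t ^+ (2 * n + 2) = A^+2 * D^+2 * B^+4 * t^+6 by pw hn.
have -> : t ^+ (j + 1) = A * t^+1 by pw hn.
have -> : t ^+ (j + 2) = A * t^+2 by pw hn.
have -> : t ^+ (2 * n - j) = A * D^+2 * B^+4 * t^+4 by pw hn.
have -> : t ^+ (2 * n - j - 1) = A * D^+2 * B^+4 * t^+3 by pw hn.
have -> : t ^+ (n + 3 * (k.+1 * k.+1) + 3 * (d * k.+1)) = A * D^+4 * B^+8 * Y^+3 * Z^+3 * t^+5 by pw hn.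
have -> : t ^+ k.+1 = B * t^+1 by pw hn.
have -> : t ^+ (d + 2 * k.+1) = D * B^+2 * t^+2 by pw hn.
have -> : t ^+ (n + 3 * (k * k) + 3 * (d * k)) = A * D * B^+2 * Y^+3 * Z^+3 * t^+2 by pw hn.
have -> : t ^+ (d + 2 * k) = D * B^+2 by pw hn.
have -> : t ^+ n.+1 = A * D * B^+2 * t^+3 by pw hn.
have -> : t ^+ n = A * D * B^+2 * t^+2 by pw hn.
have nA : A != 0 by rewrite expf_neq0.
have nB : B != 0 by rewrite expf_neq0.
have nD : D != 0 by rewrite expf_neq0.
have nY : Y != 0 by rewrite expf_neq0.
have nZ : Z != 0 by rewrite expf_neq0.
have n1 : 1 - t != 0 by rewrite -[t]expr1 hq.
have n2 : 1 - A * t ^+ 1 != 0 by rewrite -exprD hq // addn1.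
have n3 : 1 - A * t ^+ 2 != 0 by rewrite -exprD hq // addn2.
have n4 : 1 - A * D * B ^+ 2 * t ^+ 3 != 0 by rewrite -exprM -!exprD hq //; lia.
have n5 : 1 - A * D * B ^+ 2 * t ^+ 2 != 0 by rewrite -exprM -!exprD hq //; lia.
have n2' : 1 - A * t != 0 by exact: n2.
field.
by rewrite n1 n5 n3 n2' nB t0 nD n4.
Qed.


Lemma P_rec {F : fieldType} (t : F) k n : (k <= n)%N ->
  gqpoch t (- t ^+ k.+1) (n.+1 - k) = gqpoch t (- t ^+ k.+1) (n - k) * (1 + t ^+ n.+1).
Proof.
move=> kn; rewrite subSn // qpochSx mulNr opprK -exprD.
by rewrite (_ : (k.+1 + (n - k) = n.+1)%N) //; lia.
Qed.

Lemma gqint_neq0 {F : fieldType} (t : F) : tgood t -> forall m, (0 < m)%N -> gqint t m != 0.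
Proof.
move=> ht m m0; rewrite /gqint mulf_neq0 ?invr_eq0 ?e_neq0 //.
by rewrite -[t]expr1 e_neq0.
Qed.

Definition S1 {F : fieldType} (t : F) (d n : nat) : F :=
  \sum_(1 <= k < n) t ^+ k * gqbin t (2 * k) (k + d) * gqpoch t (- t ^+ k.+1) (n - k) / gqint t k.

Lemma S1_rec {F : fieldType} (t : F) d n : (1 <= n)%N ->
  S1 t d n.+1 = (1 + t ^+ n.+1) * (S1 t d n + t ^+ n * gqbin t (2 * n) (n + d) / gqint t n).
Proof.
move=> n1; rewrite /S1 big_nat_recr //= mulrDr mulr_sumr; congr (_ + _).
  apply: eq_big_nat => k /andP [_ kn]; rewrite P_rec; last by lia.
  ring.
rewrite subSn // subnn qpochSx qpoch0 expr0. ring.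
Qed.

Definition W {F : fieldType} (t : F) (d n : nat) : F := \sum_(1 <= k < n.+1) Wt t d n k.

Lemma Gf_end {F : fieldType} (t : F) d n : (1 <= d)%N -> Gf t d n n = 0.
Proof. move=> d1; rewrite /Gf qbz_neg; last by lia. by rewrite !(mulr0, mul0r). Qed.

Lemma Gf_0 {F : fieldType} (t : F) d n :
  Gf t d n 0 = t ^+ n * (1 + t ^+ n.+1) * gqint t d * qbz t (2 * n) (n%:Z - d%:Z) / gqint t n.
Proof.
rewrite /Gf !muln0 !addn0 expr0 divr1 mul1r mulr0 subr0 //.
Qed.

Lemma W_key {F : fieldType} (t : F) : tgood t -> forall d n, (1 <= d)%N -> (1 <= n)%N ->
  W t d n.+1 / gqint t n.+1 - (1 + t ^+ n.+1) * W t d n / gqint t n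
  = - (t ^+ n * (1 + t ^+ n.+1) * gqint t d * qbz t (2 * n) (n%:Z - d%:Z) / gqint t n).
Proof.
move=> ht d n d1 n1.
rewrite /W big_nat_recr //=.
have -> : Wt t d n.+1 n.+1 = 0 by rewrite /Wt qbz_neg ?mulr0 //; lia.
rewrite addr0 !big_add1 /= mulr_suml mulr_sumr mulr_suml -sumrB.
rewrite (eq_big_nat _ _ (F2 := fun k => Gf t d n k.+1 - Gf t d n k)); last first.
  by move=> k _; rewrite part1_term.
by rewrite telescope_sumr // Gf_end // Gf_0 sub0r.
Qed.

Lemma Gbz {F : fieldType} (t : F) n d : gqbin t (2 * n) (n + d) = qbz t (2 * n) (n%:Z - d%:Z).
Proof.
case: (leqP d n) => dn.
  rewrite (@qbz_pos _ t _ _ (n - d)%N); last by lia.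
  rewrite -[RHS]qbin_sym; last by lia.
  by rewrite (_ : (2 * n - (n - d) = n + d)%N) //; lia.
rewrite qbin_gt; last by lia.
by rewrite qbz_neg //; lia.
Qed.

Lemma claim1 {F : fieldType} (t : F) : tgood t -> forall d n, (1 <= d)%N -> (1 <= n)%N ->
  S1 t d n * (gqint t d * gqint t n) = - W t d n.
Proof.
move=> ht d n d1; elim: n => [//|n IH] _.
case: (posnP n) => [-> | n0].
  rewrite /S1 /W big_geq // big_nat1 /Wt qbz_neg; last by lia.
  by rewrite mulr0 oppr0 mul0r.
have IH' := IH n0.
have key := W_key t ht d n d1 n0.
rewrite S1_rec // Gbz.
have gd := gqint_neq0 t ht _ d1.
have gn := gqint_neq0 t ht _ n0.
have gn1 := gqint_neq0 t ht _ (ltn0Sn n).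
have -> : S1 t d n = - W t d n / (gqint t d * gqint t n).
  by rewrite -IH' mulfK // mulf_neq0.
have -> : W t d n.+1 = gqint t n.+1 * ((1 + t ^+ n.+1) * W t d n / gqint t n
   - t ^+ n * (1 + t ^+ n.+1) * gqint t d * qbz t (2 * n) (n%:Z - d%:Z) / gqint t n).
  rewrite -key; field; by rewrite gn gn1.
field. by rewrite gd gn.
Qed.


Definition S2 {F : fieldType} (t : F) (d n : nat) : F :=
  \sum_(1 <= k < n.+1) t ^+ k * gqbin t (2 * k) (k + d) * (gqpoch t (- t ^+ k.+1) (n - k)) ^+ 2 / gqint t k.

Definition T2 {F : fieldType} (t : F) (d n : nat) : F :=
  \sum_(d <= k < n.+1) t ^+ 'C(k.+1, 2) * gqbin t (2 * n + 1) (n - k).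

Definition Hn {F : fieldType} (t : F) (n m : nat) : F :=
  t ^+ 'C(m, 2) * gqint t m * t ^+ n.+1 * gqbin t (2 * n + 2) (n.+1 - m) / gqint t n.+1.

Lemma S2_rec {F : fieldType} (t : F) d n :
  S2 t d n.+1 = (1 + t ^+ n.+1) ^+ 2 * S2 t d n + t ^+ n.+1 * gqbin t (2 * n.+1) (n.+1 + d) / gqint t n.+1.
Proof.
rewrite /S2 big_nat_recr //= mulr_sumr; congr (_ + _).
  apply: eq_big_nat => k /andP [_ kn]; rewrite P_rec; last by lia.
  ring.
rewrite subnn qpoch0 expr1n mulr1 //.
Qed.

Lemma term2 {F : fieldType} (t : F) : tgood t -> forall n k, (k <= n)%N ->
  t ^+ 'C(k.+1, 2) * gqbin t (2 * n.+1 + 1) (n.+1 - k)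
  - (1 + t ^+ n.+1) ^+ 2 * (t ^+ 'C(k.+1, 2) * gqbin t (2 * n + 1) (n - k))
  = Hn t n k - Hn t n k.+1.
Proof.
move=> ht n k kn.
have [j hj] : exists j, n = (j + k)%N by exists (n - k)%N; lia.
have := part2_term t ht j k.
rewrite /Hn hj.
rewrite (_ : (2 * (j + k).+1 + 1 = 2 * (j + k) + 3)%N); last by lia.
rewrite (_ : ((j + k).+1 - k = j.+1)%N); last by lia.
rewrite (_ : ((j + k).+1 - k.+1 = j)%N); last by lia.
rewrite (_ : (j + k - k = j)%N); last by lia.
move=> <-; ring.
Qed.

Lemma T2_rec {F : fieldType} (t : F) : tgood t -> forall d n, (d <= n)%N ->
  T2 t d n.+1 = (1 + t ^+ n.+1) ^+ 2 * T2 t d n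
     + t ^+ 'C(d, 2) * gqint t d * t ^+ n.+1 * gqbin t (2 * n.+1) (n.+1 - d) / gqint t n.+1.
Proof.
move=> ht d n dn.
rewrite /T2 big_nat_recr /=; last by lia.
rewrite subnn qbin0 // mulr1.
have E : \sum_(d <= k < n.+1) t ^+ 'C(k.+1, 2) * gqbin t (2 * n.+1 + 1) (n.+1 - k)
   = (1 + t ^+ n.+1) ^+ 2 * \sum_(d <= k < n.+1) t ^+ 'C(k.+1, 2) * gqbin t (2 * n + 1) (n - k)
     + (Hn t n d - Hn t n n.+1).
  rewrite -[Hn t n d - _]opprB -telescope_sumr; last by lia.
  rewrite mulr_sumr -sumrN -big_split /=.
  apply: eq_big_nat => k /andP [_ kn].
  rewrite -[LHS](subrK ((1 + t ^+ n.+1) ^+ 2 * (t ^+ 'C(k.+1, 2) * gqbin t (2 * n + 1) (n - k)))).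
  have kn2 : (k <= n)%N by lia.
  rewrite term2 //.
  ring.
rewrite E.
have gn1 := gqint_neq0 t ht _ (ltn0Sn n).
rewrite /Hn subnn qbin0 // (_ : (2 * n + 2 = 2 * n.+1)%N); last by lia.
have -> : t ^+ 'C(n.+2, 2) = t ^+ 'C(n, 2) * t ^+ n * t ^+ n.+1.
  by rewrite -!exprD binS bin1 binS bin1; congr (_ ^+ _); lia.
rewrite binS bin1 exprD.
set Sm := \sum_(d <= k < n.+1) _.
field. exact: gn1.
Qed.

Lemma claim2 {F : fieldType} (t : F) : tgood t -> forall d m, (1 <= d)%N ->
  S2 t d (d + m) * gqint t d * t ^+ 'C(d, 2) = T2 t d (d + m).
Proof.
move=> ht d m d1.
have gd := gqint_neq0 t ht _ d1.
elim: m => [|m IH].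
  rewrite addn0 /S2 /T2 big_nat_recr //= big_nat1 subnn qbin0 // mulr1.
  rewrite big1_seq; last first.
    move=> k /andP [_]; rewrite mem_index_iota => /andP [_ kd].
    by rewrite qbin_gt ?(mulr0, mul0r) //; lia.
  rewrite add0r (_ : (2 * d = d + d)%N); last by lia.
  rewrite qbinn // ?subnn qpoch0 expr1n binS bin1 exprD mulr1.
  field. exact: gd.
rewrite addnS S2_rec T2_rec //; last by lia.
rewrite -IH.
rewrite -[in RHS]qbin_sym; last by lia.
rewrite (_ : (2 * (d + m).+1 - ((d + m).+1 - d) = (d + m).+1 + d)%N); last by lia.
have gn1 := gqint_neq0 t ht _ (ltn0Sn (d + m)).
field. exact: gn1.
Qed.


Lemma zpow {F : fieldType} (x : F) (a b : nat) (z : int) : x != 0 -> z = a%:Z - b%:Z ->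
  x ^ z = x ^+ a / x ^+ b.
Proof. by move=> x0 ->; rewrite expfzDr // -exprnN -exprnP. Qed.

Lemma main_gen {F : fieldType} (t : F) : tgood t -> forall n d : nat,
  (1 <= n)%N -> (1 <= d)%N -> (d <= n - 1)%N ->
  (\sum_(1 <= k < n) t ^+ k * gqbin t (2 * k) (k + d) * gqpoch t (- t ^+ k.+1) (n - k) / gqint t k
   = - \sum_(1 <= k < ((n + 1 - d) %/ 2).+1)
         (-1) ^+ k * t ^ ((3 * (k ^ 2))%:Z + (3 * d%:Z - 5) * k%:Z - 2 * d%:Z + 2)
         * gqint t (2 * d + 4 * k - 2) / (gqint t d * gqint t n)
         * gqbin t (2 * n) (n + 1 - d - 2 * k))
  /\
  (\sum_(1 <= k < n.+1) t ^+ k * gqbin t (2 * k) (k + d) * (gqpoch t (- t ^+ k.+1) (n - k)) ^+ 2 / gqint t k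
   = \sum_(d <= k < n) t ^ (('C(k.+1, 2))%:Z - ('C(d, 2))%:Z) / gqint t d * gqbin t (2 * n + 1) (n - k)
     + t ^ (('C(n.+1, 2))%:Z - ('C(d, 2))%:Z) / gqint t d).
Proof.
move=> ht n d n1 d1 dn.
have [t0 _] := ht.
have gd := gqint_neq0 t ht _ d1.
have gn := gqint_neq0 t ht _ n1.
split.
  have C1 := claim1 t ht d n d1 n1.
  rewrite -/(S1 t d n).
  have -> : S1 t d n = - W t d n / (gqint t d * gqint t n).
    by rewrite -C1 mulfK // mulf_neq0.
  rewrite mulNr; congr (- _).
  rewrite mulr_suml /W.
  have E1 := divn_eq (n + 1 - d) 2.
  have E2 : ((n + 1 - d) %% 2 < 2)%N by rewrite ltn_pmod.
  set K := ((n + 1 - d) %/ 2)%N in E1 *.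
  have KK : (K.+1 <= n.+1)%N by lia.
  rewrite (big_cat_nat _ (n := K.+1)) //=.
  rewrite [X in _ + X]big1_seq ?addr0; last first.
    move=> k /andP [_]; rewrite mem_index_iota => /andP [kK _].
    by rewrite /Wt qbz_neg ?mulr0 ?mul0r //; lia.
  apply: eq_big_nat => k /andP [k1 kK].
  rewrite /Wt /ck (@qbz_pos _ t _ _ (n + 1 - d - 2 * k)%N); last by lia.
  rewrite (@zpow _ t (3 * (k * k) + 3 * (d * k) + 2) (5 * k + 2 * d)) //; last by lia.
  ring.
have dn' : (d <= n)%N by lia.
have C2 := claim2 t ht d (n - d) d1.
rewrite subnKC // in C2.
have tC : t ^+ 'C(d, 2) != 0 by rewrite expf_neq0.
rewrite -/(S2 t d n).
have -> : S2 t d n = T2 t d n / (gqint t d * t ^+ 'C(d, 2)).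
  by rewrite -C2; field; rewrite gd tC.
rewrite /T2 big_nat_recr //= subnn qbin0 // mulr1 mulrDl mulr_suml.
rewrite (@zpow _ t 'C(n.+1, 2) 'C(d, 2)) //.
congr (_ + _); last by field; rewrite gd tC.
apply: eq_big_nat => k /andP [k1 kK].
rewrite (@zpow _ t 'C(k.+1, 2) 'C(d, 2)) //.
field. by rewrite gd tC.
Qed.


Theorem theorem1p4 (n d : nat) :
  (1 <= n)%N -> (1 <= d)%N -> (d <= n - 1)%N ->
  (\sum_(1 <= k < n) q ^+ k * qbin (2 * k) (k + d) * qpoch (- q ^+ k.+1) (n - k) / qint k
   = - \sum_(1 <= k < ((n + 1 - d) %/ 2).+1)
         (-1) ^+ k * q ^ ((3 * (k ^ 2))%:Z + (3 * d%:Z - 5) * k%:Z - 2 * d%:Z + 2)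
         * qint (2 * d + 4 * k - 2) / (qint d * qint n)
         * qbin (2 * n) (n + 1 - d - 2 * k))
  /\
  (\sum_(1 <= k < n.+1) q ^+ k * qbin (2 * k) (k + d) * (qpoch (- q ^+ k.+1) (n - k)) ^+ 2 / qint k
   = \sum_(d <= k < n) q ^ (('C(k.+1, 2))%:Z - ('C(d, 2))%:Z) / qint d * qbin (2 * n + 1) (n - k)
     + q ^ (('C(n.+1, 2))%:Z - ('C(d, 2))%:Z) / qint d).
Proof. exact: (main_gen q q_good n d). Qed.
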